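(* The variety $\mathsf{V}(S_{(4,398)})$ is the ai-semiring variety defined by the identities $xy\approx yx$, $xy\approx xy+x$, $x^2+yz\approx x^2yz$, $xyz\approx xy+yz+xz$.
   Context: An ai-semiring is an algebra $(S,+,\cdot)$ with $(S,+)$ a semilattice, $(S,\cdot)$ a semigroup, and both distributive laws. $\mathsf{V}(S)$ is the variety generated by $S$; ''the ai-semiring variety defined by identities $\Sigma$'' is the class of all ai-semirings satisfying $\Sigma$. $S_{(4,398)}$ has carrier $\{1,2,3,4\}$; addition: $x+x=x$, $2+x=x$, $1+x=1$ for all $x$, $3+4=1$; multiplication (row $a$, column $b$ gives $a\cdot b$): row $1$: $1,1,1,1$; row $2$: $1,2,1,4$; row $3$: $1,1,1,1$; row $4$: $1,4,1,1$. *)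

(* Defs.v *)
Record aisemiring := AISemiring {
  car :> Type;
  sadd : car -> car -> car;
  smul : car -> car -> car;
  sadd_assoc : forall x y z, sadd x (sadd y z) = sadd (sadd x y) z;
  sadd_comm : forall x y, sadd x y = sadd y x;
  sadd_idem : forall x, sadd x x = x;
  smul_assoc : forall x y z, smul x (smul y z) = smul (smul x y) z;
  smul_addl : forall x y z, smul x (sadd y z) = sadd (smul x y) (smul x z);
  smul_addr : forall x y z, smul (sadd x y) z = sadd (smul x z) (smul y z)
}.

Arguments sadd {a} _ _.
Arguments smul {a} _ _.

(** Membership in the variety V(S) = HSP(S): T is a homomorphic image of a
    subalgebra of a direct power S^I (I an arbitrary index type). *)
Definition in_variety (S T : aisemiring) : Prop :=
  exists (I : Type) (B : (I -> S) -> Prop) (f : {x : I -> S | B x} -> T),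
    (forall x y, B x -> B y -> B (fun i => sadd (x i) (y i))) /\
    (forall x y, B x -> B y -> B (fun i => smul (x i) (y i))) /\
    (forall (x y : {x : I -> S | B x}) (Hxy : B (fun i => sadd (proj1_sig x i) (proj1_sig y i))),
       f (exist _ _ Hxy) = sadd (f x) (f y)) /\
    (forall (x y : {x : I -> S | B x}) (Hxy : B (fun i => smul (proj1_sig x i) (proj1_sig y i))),
       f (exist _ _ Hxy) = smul (f x) (f y)) /\
    (forall t : T, exists x, f x = t).

Definition satisfies_Sigma (T : aisemiring) : Prop :=
  (forall x y : T, smul x y = smul y x) /\
  (forall x y : T, smul x y = sadd (smul x y) x) /\
  (forall x y z : T, sadd (smul x x) (smul y z) = smul (smul (smul x x) y) z) /\
  (forall x y z : T, smul (smul x y) z = sadd (sadd (smul x y) (smul y z)) (smul x z)).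

Inductive four := e1 | e2 | e3 | e4.

Definition add4 (a b : four) : four :=
  match a, b with
  | e1, _ | _, e1 => e1
  | e2, x | x, e2 => x
  | e3, e3 => e3
  | e4, e4 => e4
  | e3, e4 | e4, e3 => e1
  end.

Definition mul4 (a b : four) : four :=
  match a, b with
  | e2, e2 => e2
  | e2, e4 => e4
  | e4, e2 => e4
  | _, _ => e1
  end.

Lemma add4_assoc : forall x y z, add4 x (add4 y z) = add4 (add4 x y) z.
Proof. destruct x, y, z; reflexivity. Qed.
Lemma add4_comm : forall x y, add4 x y = add4 y x.
Proof. destruct x, y; reflexivity. Qed.
Lemma add4_idem : forall x, add4 x x = x.
Proof. destruct x; reflexivity. Qed.
Lemma mul4_assoc : forall x y z, mul4 x (mul4 y z) = mul4 (mul4 x y) z.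
Proof. destruct x, y, z; reflexivity. Qed.
Lemma mul4_addl : forall x y z, mul4 x (add4 y z) = add4 (mul4 x y) (mul4 x z).
Proof. destruct x, y, z; reflexivity. Qed.
Lemma mul4_addr : forall x y z, mul4 (add4 x y) z = add4 (mul4 x z) (mul4 y z).
Proof. destruct x, y, z; reflexivity. Qed.

Definition S4398 : aisemiring :=
  AISemiring four add4 mul4 add4_assoc add4_comm add4_idem
    mul4_assoc mul4_addl mul4_addr.

(* Main.v *)
Require Import Defs.
From Stdlib Require Import Classical ClassicalEpsilon FunctionalExtensionality ProofIrrelevance Lia.

Inductive term (X : Type) :=
| Var (x : X) | Add (t s : term X) | Mul (t s : term X).
Arguments Var {X} x.
Arguments Add {X} t s.
Arguments Mul {X} t s.

Fixpoint evalA (A : aisemiring) {X} (v : X -> A) (t : term X) : A :=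
  match t with
  | Var x => v x
  | Add t s => sadd (evalA A v t) (evalA A v s)
  | Mul t s => smul (evalA A v t) (evalA A v s)
  end.

Fixpoint occ {X} (t : term X) (a : X) : Prop :=
  match t with
  | Var x => x = a
  | Add t s => occ t a \/ occ s a
  | Mul t s => occ t a \/ occ s a
  end.

Fixpoint Wd {X} (t : term X) (a : X) : Prop :=
  match t with
  | Var x => False
  | Add t s => Wd t a \/ Wd s a
  | Mul t s => occ t a \/ occ s a
  end.

Fixpoint Pr {X} (t : term X) (a b : X) : Prop :=
  match t with
  | Var x => False
  | Add t s => Pr t a b \/ Pr s a b
  | Mul t s => Pr t a b \/ Pr s a b \/ (occ t a /\ occ s b) \/ (occ t b /\ occ s a)
  end.

Fixpoint size {X} (t : term X) : nat :=
  match t with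
  | Var _ => 1
  | Add t s => S (size t + size s)
  | Mul t s => S (size t + size s)
  end.

Lemma W_occ {X} (t : term X) a : Wd t a -> occ t a.
Proof. induction t; simpl; tauto. Qed.

Lemma Pr_occ {X} (t : term X) a b : Pr t a b -> occ t a /\ occ t b.
Proof. induction t; simpl; tauto. Qed.

Lemma Pr_W {X} (t : term X) a b : Pr t a b -> Wd t a /\ Wd t b.
Proof. induction t; simpl; try tauto.
  pose proof (Pr_occ t1 a b); pose proof (Pr_occ t2 a b); tauto. Qed.

Definition evalS {X} (v : X -> four) (t : term X) : four := evalA S4398 v t.

Definition v3 {X} (a : X) (x : X) : four :=
  if excluded_middle_informative (x = a) then e3 else e2.

Definition v4 {X} (a b : X) (x : X) : four :=
  if excluded_middle_informative (x = a \/ x = b) then e4 else e2.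

Lemma S3 {X} (a : X) (t : term X) :
  (~ occ t a /\ evalS (v3 a) t = e2) \/
  (occ t a /\ ~ Wd t a /\ evalS (v3 a) t = e3) \/
  (Wd t a /\ evalS (v3 a) t = e1).
Proof.
  induction t as [x|t IHt s IHs|t IHt s IHs]; unfold evalS in *; simpl.
  - unfold v3; destruct (excluded_middle_informative (x = a)); tauto.
  - pose proof (W_occ t a); pose proof (W_occ s a).
    destruct IHt as [[? E1]|[[? [? E1]]|[? E1]]];
    destruct IHs as [[? E2]|[[? [? E2]]|[? E2]]]; rewrite E1, E2; simpl; tauto.
  - pose proof (W_occ t a); pose proof (W_occ s a).
    destruct IHt as [[? E1]|[[? [? E1]]|[? E1]]];
    destruct IHs as [[? E2]|[[? [? E2]]|[? E2]]]; rewrite E1, E2; simpl; tauto.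
Qed.

Lemma S4 {X} (a b : X) (t : term X) :
  (~ occ t a /\ ~ occ t b /\ evalS (v4 a b) t = e2) \/
  ((occ t a \/ occ t b) /\ ~ (Pr t a b \/ Pr t a a \/ Pr t b b) /\ evalS (v4 a b) t = e4) \/
  ((Pr t a b \/ Pr t a a \/ Pr t b b) /\ evalS (v4 a b) t = e1).
Proof.
  induction t as [x|t IHt s IHs|t IHt s IHs]; unfold evalS in *; simpl.
  - unfold v4; destruct (excluded_middle_informative (x = a \/ x = b)); tauto.
  - pose proof (Pr_occ t a b); pose proof (Pr_occ s a b);
    pose proof (Pr_occ t a a); pose proof (Pr_occ s a a);
    pose proof (Pr_occ t b b); pose proof (Pr_occ s b b).
    destruct IHt as [[? [? E1]]|[[? [? E1]]|[? E1]]];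
    destruct IHs as [[? [? E2]]|[[? [? E2]]|[? E2]]]; rewrite E1, E2; simpl; tauto.
  - pose proof (Pr_occ t a b); pose proof (Pr_occ s a b);
    pose proof (Pr_occ t a a); pose proof (Pr_occ s a a);
    pose proof (Pr_occ t b b); pose proof (Pr_occ s b b).
    destruct IHt as [[? [? E1]]|[[? [? E1]]|[? E1]]];
    destruct IHs as [[? [? E2]]|[[? [? E2]]|[? E2]]]; rewrite E1, E2; simpl; tauto.
Qed.

Lemma occ_transfer {X} (t1 t2 : term X) a :
  (forall v, evalS v t1 = evalS v t2) -> occ t2 a -> occ t1 a.
Proof.
  intros H Ho. specialize (H (v3 a)).
  pose proof (W_occ t1 a); pose proof (W_occ t2 a).
  destruct (S3 a t1) as [[? E1]|[[? [? E1]]|[? E1]]];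
  destruct (S3 a t2) as [[? E2]|[[? [? E2]]|[? E2]]];
  first [congruence | tauto].
Qed.

Lemma W_transfer {X} (t1 t2 : term X) a :
  (forall v, evalS v t1 = evalS v t2) -> Wd t2 a -> Wd t1 a.
Proof.
  intros H Ho. specialize (H (v3 a)).
  pose proof (W_occ t1 a); pose proof (W_occ t2 a).
  destruct (S3 a t1) as [[? E1]|[[? [? E1]]|[? E1]]];
  destruct (S3 a t2) as [[? E2]|[[? [? E2]]|[? E2]]];
  first [congruence | tauto].
Qed.

Lemma Pr_transfer {X} (t1 t2 : term X) a b :
  (forall v, evalS v t1 = evalS v t2) -> Pr t2 a b -> Pr t1 a b \/ Pr t1 a a \/ Pr t1 b b.
Proof.
  intros H Ho. specialize (H (v4 a b)).
  pose proof (Pr_occ t1 a b); pose proof (Pr_occ t2 a b);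
  pose proof (Pr_occ t1 a a); pose proof (Pr_occ t2 a a);
  pose proof (Pr_occ t1 b b); pose proof (Pr_occ t2 b b).
  destruct (S4 a b t1) as [[? [? E1]]|[[? [? E1]]|[? E1]]];
  destruct (S4 a b t2) as [[? [? E2]]|[[? [? E2]]|[? E2]]];
  first [congruence | tauto].
Qed.

Definition evalT (T : aisemiring) (t : term T) : T := evalA T (fun x => x) t.

Lemma ge_l (T : aisemiring) (x y : T) : sadd (sadd x y) x = sadd x y.
Proof. rewrite (sadd_comm _ x y), <- sadd_assoc, sadd_idem; reflexivity. Qed.

Lemma ge_r (T : aisemiring) (x y : T) : sadd (sadd x y) y = sadd x y.
Proof. rewrite <- sadd_assoc, sadd_idem; reflexivity. Qed.

Lemma ab_trans (T : aisemiring) (z y a : T) : sadd z y = z -> sadd y a = y -> sadd z a = z.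
Proof. intros H1 H2. rewrite <- H1, <- sadd_assoc, H2; reflexivity. Qed.

Lemma ab_sum (T : aisemiring) (z a b : T) : sadd z a = z -> sadd z b = z -> sadd z (sadd a b) = z.
Proof. intros H1 H2. rewrite sadd_assoc, H1, H2; reflexivity. Qed.

Lemma ab_addl (T : aisemiring) (y z a : T) : sadd y a = y -> sadd (sadd y z) a = sadd y z.
Proof. intros H. rewrite <- sadd_assoc, (sadd_comm _ z a), sadd_assoc, H; reflexivity. Qed.

Lemma ab_addr (T : aisemiring) (y z a : T) : sadd z a = z -> sadd (sadd y z) a = sadd y z.
Proof. intros H. rewrite <- sadd_assoc, H; reflexivity. Qed.

Lemma ab_mul (T : aisemiring) (x y a b : T) :
  sadd x a = x -> sadd y b = y -> sadd (smul x y) (smul a b) = smul x y.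
Proof.
  intros Hx Hy. rewrite <- Hx, <- Hy.
  rewrite !smul_addl, !smul_addr.
  rewrite <- (sadd_assoc _ _ (sadd _ _) _), ge_r. reflexivity.
Qed.

Lemma ge_mul_l (T : aisemiring) (HS : satisfies_Sigma T) (x y : T) : sadd (smul x y) x = smul x y.
Proof. destruct HS as (Hc & H2 & H3 & H4). symmetry; apply H2. Qed.

Lemma ge_mul_r (T : aisemiring) (HS : satisfies_Sigma T) (x y : T) : sadd (smul x y) y = smul x y.
Proof. pose proof HS as (Hc & _). rewrite (Hc x y). apply ge_mul_l; auto. Qed.

Lemma T1 (T : aisemiring) (HS : satisfies_Sigma T) (t : term T) a :
  occ t a -> sadd (evalT T t) a = evalT T t.
Proof.
  unfold evalT; induction t as [x|t IHt s IHs|t IHt s IHs]; simpl; intros Ho.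
  - subst; apply sadd_idem.
  - destruct Ho as [Ho|Ho]; [apply ab_addl | apply ab_addr]; auto.
  - destruct Ho as [Ho|Ho].
    + eapply ab_trans; [apply ge_mul_l; auto | auto].
    + eapply ab_trans; [apply ge_mul_r; auto | auto].
Qed.

Lemma T2 (T : aisemiring) (HS : satisfies_Sigma T) (t : term T) a b :
  Pr t a b -> sadd (evalT T t) (smul a b) = evalT T t.
Proof.
  pose proof HS as (Hc & _).
  unfold evalT; induction t as [x|t IHt s IHs|t IHt s IHs]; simpl; intros Ho.
  - destruct Ho.
  - destruct Ho as [Ho|Ho]; [apply ab_addl | apply ab_addr]; auto.
  - destruct Ho as [Ho|[Ho|[[H1 H2]|[H1 H2]]]].
    + eapply ab_trans; [apply ge_mul_l; auto | auto].
    + eapply ab_trans; [apply ge_mul_r; auto | auto].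
    + apply ab_mul; apply (T1 T HS); auto.
    + rewrite (Hc a b). apply ab_mul; apply (T1 T HS); auto.
Qed.

Lemma T3 (T : aisemiring) (HS : satisfies_Sigma T) (t : term T) a :
  Wd t a -> exists c, sadd (evalT T t) (smul a c) = evalT T t.
Proof.
  pose proof HS as (Hc & _).
  unfold evalT; induction t as [x|t IHt s IHs|t IHt s IHs]; simpl; intros Ho.
  - destruct Ho.
  - destruct Ho as [Ho|Ho]; [destruct (IHt Ho) as [c Hc']| destruct (IHs Ho) as [c Hc']];
      exists c; [apply ab_addl | apply ab_addr]; auto.
  - destruct Ho as [Ho|Ho].
    + exists (evalA T (fun x => x) s). apply ab_mul; [apply (T1 T HS t a Ho) | apply sadd_idem].
    + exists (evalA T (fun x => x) t). rewrite (Hc a). apply ab_mul; [apply sadd_idem | apply (T1 T HS s a Ho)].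
Qed.

Lemma key (T : aisemiring) (HS : satisfies_Sigma T) (z a b c : T) :
  sadd z (smul a a) = z -> sadd z (smul b c) = z -> sadd z (smul a b) = z.
Proof.
  pose proof HS as (Hc & H2 & H3 & H4). intros Ha Hb.
  eapply ab_trans; [apply (ab_sum _ _ _ _ Ha Hb)|].
  rewrite H3.
  apply (ab_trans _ _ (smul (smul a a) b)).
  - rewrite (H4 (smul a a) b c).
    rewrite <- (sadd_assoc _ _ (smul (smul a a) c) _), (sadd_comm _ (smul (smul a a) c)).
    rewrite sadd_assoc, ge_l. reflexivity.
  - rewrite (H4 a a b). apply ge_r.
Qed.

Lemma absorb (T : aisemiring) (HS : satisfies_Sigma T) :
  forall n (t : term T), size t <= n -> forall z : T,
  (forall a, occ t a -> sadd z a = z) ->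
  (forall a b, Pr t a b -> sadd z (smul a b) = z) ->
  sadd z (evalT T t) = z.
Proof.
  pose proof HS as (Hc & H2 & H3 & H4).
  induction n as [|n IH]; intros t Hs z Ho Hp; [destruct t; simpl in Hs; lia|].
  destruct t as [x|u s|u s]; simpl in Hs.
  - apply Ho. reflexivity.
  - unfold evalT; simpl. apply ab_sum.
    + apply (IH u); [lia| |]; intros; [apply Ho|apply Hp]; simpl; tauto.
    + apply (IH s); [lia| |]; intros; [apply Ho|apply Hp]; simpl; tauto.
  - destruct u as [a|u1 u2|u1 u2].
    + destruct s as [b|s1 s2|s1 s2].
      * apply Hp. simpl. tauto.
      * unfold evalT; simpl. rewrite smul_addl. apply ab_sum.
        -- apply (IH (Mul (Var a) s1)); simpl in *; [lia| |]; intros; [apply Ho|apply Hp]; simpl; tauto.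
        -- apply (IH (Mul (Var a) s2)); simpl in *; [lia| |]; intros; [apply Ho|apply Hp]; simpl; tauto.
      * unfold evalT; simpl. rewrite Hc, H4. apply ab_sum; [apply ab_sum|].
        -- apply (IH (Mul s1 s2)); simpl in *; [lia| |]; intros; [apply Ho|apply Hp]; simpl in *; tauto.
        -- apply (IH (Mul s2 (Var a))); simpl in *; [lia| |]; intros; [apply Ho|apply Hp]; simpl in *; tauto.
        -- apply (IH (Mul s1 (Var a))); simpl in *; [lia| |]; intros; [apply Ho|apply Hp]; simpl in *; tauto.
    + unfold evalT; simpl. rewrite smul_addr. apply ab_sum.
      * apply (IH (Mul u1 s)); simpl in *; [lia| |]; intros; [apply Ho|apply Hp]; simpl; tauto.
      * apply (IH (Mul u2 s)); simpl in *; [lia| |]; intros; [apply Ho|apply Hp]; simpl; tauto.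
    + unfold evalT; simpl. rewrite H4. apply ab_sum; [apply ab_sum|].
      * apply (IH (Mul u1 u2)); simpl in *; [lia| |]; intros; [apply Ho|apply Hp]; simpl in *; tauto.
      * apply (IH (Mul u2 s)); simpl in *; [lia| |]; intros; [apply Ho|apply Hp]; simpl in *; tauto.
      * apply (IH (Mul u1 s)); simpl in *; [lia| |]; intros; [apply Ho|apply Hp]; simpl in *; tauto.
Qed.

Lemma main_half (T : aisemiring) (HS : satisfies_Sigma T) (t1 t2 : term T) :
  (forall v, evalS v t1 = evalS v t2) -> sadd (evalT T t1) (evalT T t2) = evalT T t1.
Proof.
  pose proof HS as (Hc & H2 & H3 & H4). intros Heq.
  apply (absorb T HS (size t2) t2 (le_n _)).
  - intros a Ha. apply T1; auto. eapply occ_transfer; eauto.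
  - intros a b Hab.
    destruct (Pr_transfer t1 t2 a b Heq Hab) as [P|[P|P]].
    + apply T2; auto.
    + destruct (Pr_W t2 a b Hab) as [_ Wb].
      destruct (T3 T HS t1 b (W_transfer t1 t2 b Heq Wb)) as [c Hcb].
      apply (key T HS _ a b c); auto. apply T2; auto.
    + destruct (Pr_W t2 a b Hab) as [Wa _].
      destruct (T3 T HS t1 a (W_transfer t1 t2 a Heq Wa)) as [c Hca].
      rewrite Hc. apply (key T HS _ b a c); auto. apply T2; auto.
Qed.

Lemma main (T : aisemiring) (HS : satisfies_Sigma T) (t1 t2 : term T) :
  (forall v, evalS v t1 = evalS v t2) -> evalT T t1 = evalT T t2.
Proof.
  intros Heq.
  rewrite <- (main_half T HS t1 t2 Heq), sadd_comm.
  apply main_half; auto.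
Qed.

Lemma sub_eq {A : Type} (B : A -> Prop) (p q : {x | B x}) : proj1_sig p = proj1_sig q -> p = q.
Proof. destruct p, q; simpl; intros; subst; f_equal; apply proof_irrelevance. Qed.

Lemma dir2 (T : aisemiring) : satisfies_Sigma T -> in_variety S4398 T.
Proof.
  intros HS.
  exists (T -> four).
  exists (fun g => exists t : term T, g = fun v => evalS v t).
  pose (tm := fun (p : {g : (T -> four) -> four | exists t : term T, g = fun v => evalS v t}) =>
          proj1_sig (constructive_indefinite_description _ (proj2_sig p))).
  assert (Htm : forall p v, proj1_sig p v = evalS v (tm p)).
  { intros p v. unfold tm. destruct (constructive_indefinite_description _ (proj2_sig p)) as [t Ht].
    simpl. rewrite Ht. reflexivity. }
  exists (fun p => evalT T (tm p)).
  split; [|split; [|split; [|split]]].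
  - intros x y [t1 ->] [t2 ->]. exists (Add t1 t2). reflexivity.
  - intros x y [t1 ->] [t2 ->]. exists (Mul t1 t2). reflexivity.
  - intros x y Hxy. change (sadd (evalT T (tm x)) (evalT T (tm y))) with (evalT T (Add (tm x) (tm y))).
    apply main; auto. intros v. rewrite <- Htm. simpl. rewrite !Htm. reflexivity.
  - intros x y Hxy. change (smul (evalT T (tm x)) (evalT T (tm y))) with (evalT T (Mul (tm x) (tm y))).
    apply main; auto. intros v. rewrite <- Htm. simpl. rewrite !Htm. reflexivity.
  - intros t.
    assert (Hb : exists t' : term T, (fun v : T -> four => v t) = fun v => evalS v t')
      by (exists (Var t); reflexivity).
    exists (exist (fun g => exists t0 : term T, g = fun v => evalS v t0) (fun v : T -> four => v t) Hb).
    change t with (evalT T (Var t)) at 2. apply main; auto.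
    intros v. rewrite <- Htm. reflexivity.
Qed.

Ltac fin padd pmul := apply sub_eq; unfold padd, pmul; simpl; apply functional_extensionality;
  let i := fresh "i" in intro i;
  repeat match goal with |- context [?g i] => is_var g; let a := fresh "a" in set (a := g i); destruct a end;
  reflexivity.

Lemma dir1 (T : aisemiring) : in_variety S4398 T -> satisfies_Sigma T.
Proof.
  intros (I & B & f & Hadd & Hmul & Fadd & Fmul & Fsurj).
  pose (padd := fun p q : {x | B x} => exist B _ (Hadd _ _ (proj2_sig p) (proj2_sig q))).
  pose (pmul := fun p q : {x | B x} => exist B _ (Hmul _ _ (proj2_sig p) (proj2_sig q))).
  assert (fadd : forall p q, f (padd p q) = sadd (f p) (f q)) by (intros; apply Fadd).
  assert (fmul : forall p q, f (pmul p q) = smul (f p) (f q)) by (intros; apply Fmul).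
  split; [|split; [|split]].
  - intros x y. destruct (Fsurj x) as [p <-]. destruct (Fsurj y) as [q <-].
    repeat first [rewrite <- fmul | rewrite <- fadd]. f_equal; repeat match goal with p : {x | B x} |- _ => destruct p end; fin padd pmul.
  - intros x y. destruct (Fsurj x) as [p <-]. destruct (Fsurj y) as [q <-].
    repeat first [rewrite <- fmul | rewrite <- fadd]. f_equal; repeat match goal with p : {x | B x} |- _ => destruct p end; fin padd pmul.
  - intros x y z. destruct (Fsurj x) as [p <-]. destruct (Fsurj y) as [q <-]. destruct (Fsurj z) as [r <-].
    repeat first [rewrite <- fmul | rewrite <- fadd]. f_equal; repeat match goal with p : {x | B x} |- _ => destruct p end; fin padd pmul.
  - intros x y z. destruct (Fsurj x) as [p <-]. destruct (Fsurj y) as [q <-]. destruct (Fsurj z) as [r <-].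
    repeat first [rewrite <- fmul | rewrite <- fadd]. f_equal; repeat match goal with p : {x | B x} |- _ => destruct p end; fin padd pmul.
Qed.

Theorem proposition6p13 :
  forall T : aisemiring, in_variety S4398 T <-> satisfies_Sigma T.
Proof.
  intros T; split; [apply dir1 | apply dir2].
Qed.
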